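(* Let $n\ge1$, let $0<x_1<x_2<\dots<x_{n+1}<1$, and let $A$ be the $(n+1)\times(n+1)$ Bernstein–Vandermonde matrix, $a_{r,c}=\binom{n}{c-1}x_r^{\,c-1}(1-x_r)^{n-c+1}$. Then the diagonal pivots of the Neville elimination of $A$ are, for $i=1,\dots,n+1$, $$p_{i,i}=\frac{\binom{n}{i-1}(1-x_i)^{n-i+1}\prod_{k=1}^{i-1}(x_i-x_k)}{\prod_{k=1}^{i-1}(1-x_k)}$$ (empty products equal $1$).
   Context: Neville elimination of a nonsingular $N\times N$ matrix $M$: set $M_1=M$ and, for $t=1,\dots,N-1$, obtain $M_{t+1}=(a^{(t+1)}_{i,j})$ from $M_t=(a^{(t)}_{i,j})$ by $a^{(t+1)}_{i,j}=a^{(t)}_{i,j}$ if $i\le t$; $a^{(t+1)}_{i,j}=a^{(t)}_{i,j}-\big(a^{(t)}_{i,t}/a^{(t)}_{i-1,t}\big)a^{(t)}_{i-1,j}$ if $i\ge t+1$ and $j\ge t+1$; and $a^{(t+1)}_{i,j}=0$ otherwise. The pivot $(i,j)$ is $p_{i,j}=a^{(j)}_{i,j}$ for $1\le j\le i\le N$; the diagonal pivots are $p_{i,i}$. *)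

(* Defs.v *)
(* Indices are 0-based: row/column r of 'M_(n.+1) is r+1 in the paper. *)
From HB Require Import structures.
From mathcomp Require Import all_boot all_order all_algebra.
Set Implicit Arguments. Unset Strict Implicit. Unset Printing Implicit Defensive.
Import Order.TTheory GRing.Theory Num.Theory.
Local Open Scope ring_scope.

Section Neville.
Variable R : fieldType.
Variable n : nat.

(* One Neville step. [neville_step t M] maps the paper's M_{t+1} to M_{t+2}
   (0-based t: rows i <= t are kept, columns j > t are updated using the
   previous row, the rest is zeroed). *)
Definition neville_step (t : nat) (M : 'M[R]_n.+1) : 'M[R]_n.+1 :=
  \matrix_(i, j)
    if (i <= t)%N then M i j
    else if (t < j)%N then
      M i j - (M i (inord t) / M (inord i.-1) (inord t)) * M (inord i.-1) j
    else 0.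

(* [neville_iter M t] is the paper's M_{t+1}. *)
Fixpoint neville_iter (M : 'M[R]_n.+1) (t : nat) : 'M[R]_n.+1 :=
  match t with
  | 0 => M
  | t'.+1 => neville_step t' (neville_iter M t')
  end.

(* Pivot p_{i,j} = a^{(j)}_{i,j} (0-based: entry (i,j) of neville_iter M j). *)
Definition neville_pivot (M : 'M[R]_n.+1) (i j : 'I_n.+1) : R :=
  neville_iter M j i j.

End Neville.

Definition bernstein_vandermonde (R : fieldType) (n : nat) (x : 'I_n.+1 -> R)
  : 'M[R]_n.+1 :=
  \matrix_(r, c) ('C(n, c)%:R * x r ^+ c * (1 - x r) ^+ (n - c)).

(* Main.v *)
Require Import Defs.
From HB Require Import structures.
From mathcomp Require Import all_boot all_order all_algebra.
From mathcomp Require Import ring lra zify.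
Import Order.TTheory GRing.Theory Num.Theory.
Local Open Scope ring_scope.

Lemma iter_scale (R : fieldType) n (V : 'M[R]_n.+1) (d c : 'I_n.+1 -> R) :
 (forall i, d i != 0) -> (forall j, c j != 0) ->
 forall t i j, neville_iter (\matrix_(i,j) (d i * c j * V i j)) t i j
     = d i * c j * neville_iter V t i j.
Proof.
move=> hd hc; elim=> [|t IH] i j /=; first by rewrite mxE.
rewrite /neville_step !mxE !IH; case: ifP => // _; case: ifP => _; last by rewrite mulr0.
set a := neville_iter V t _ _.
set b := neville_iter V t _ _.
set e := neville_iter V t _ _.
set f := neville_iter V t _ _.
have := hd (inord i.-1); have := hc (inord t).
case: (eqVneq e 0) => he.
  by rewrite he !mulr0 invr0 !mulr0 !mul0r !subr0.
by move=> h1 h2; field; rewrite h1 h2 he.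
Qed.

Section G.
Variable R : fieldType.
Variable n : nat.
Definition G (a : R) : {poly R} := \poly_(k < n.+1) (a ^+ k).

Lemma G_geom a : G a * (1 - a%:P * 'X) = 1 - (a ^+ n.+1)%:P * 'X^(n.+1).
Proof.
rewrite /G poly_def -(big_mkord xpredT (fun i : nat => (a ^+ i) *: ('X^i : {poly R}))).
have -> : \sum_(0 <= i < n.+1) (a ^+ i) *: 'X^i = \sum_(0 <= i < n.+1) ((a ^+ i)%:P * 'X^i).
  by apply: eq_bigr => i _; rewrite mul_polyC.
rewrite mulrBr mulr1 big_distrl /=.
have -> : \sum_(0 <= i < n.+1) (a ^+ i)%:P * 'X^i * (a%:P * 'X)
   = \sum_(0 <= i < n.+1) (a ^+ i.+1)%:P * 'X^(i.+1).
  apply: eq_bigr => i _; rewrite exprS exprSr polyCM; ring.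
rewrite -[LHS]opprB -sumrB (telescope_sumr (fun i => (a ^+ i)%:P * 'X^i)) //.
by rewrite expr0 mul1r expr0 opprB.
Qed.

Lemma KL (q : {poly R}) (a b : R) m : (1 <= m <= n)%N ->
  (q * G a)`_m - (G b * q)`_m = (a - b) * (G b * q * G a)`_(m.-1).
Proof.
move=> /andP [m1 mn].
set U := G b * q * G a.
have E1 : U * (1 - a%:P * 'X) = G b * q * (1 - (a ^+ n.+1)%:P * 'X^(n.+1)).
  by rewrite -G_geom /U; ring.
have E2 : U * (1 - b%:P * 'X) = G a * q * (1 - (b ^+ n.+1)%:P * 'X^(n.+1)).
  by rewrite -G_geom /U; ring.
have E : (a - b)%:P * U * 'X = q * G a - G b * q
   + (G b * q * (a ^+ n.+1)%:P - G a * q * (b ^+ n.+1)%:P) * 'X^(n.+1).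
  transitivity (U * (1 - b%:P * 'X) - U * (1 - a%:P * 'X)); first by rewrite polyCB; ring.
  rewrite E1 E2; ring.
have := congr1 (fun p : {poly R} => p`_m) E.
rewrite coefMX coefD coefMXn ltnS mn addr0 coefB.
rewrite (negbTE (_ : m != 0%N)); last by lia.
by rewrite coefCM => ->.
Qed.
End G.
Arguments G {R} n a.
Arguments KL {R} n q a b m.
Section Vand.
Variable R : fieldType.
Variable n : nat.
Variable Y : nat -> R.
Hypothesis hY : forall k l, (k <= n)%N -> (l <= n)%N -> k != l -> Y k != Y l.

Definition Vm : 'M[R]_n.+1 := \matrix_(i, j) (Y i ^+ j).
Definition Q i t := \prod_(i - t <= k < i.+1) G n (Y k).
Definition P i t := \prod_(i - t <= k < i) (Y i - Y k).

Lemma Q0 i t : (Q i t)`_0 = 1.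
Proof.
rewrite -horner_coef0 horner_prod; apply: big1 => k _.
by rewrite horner_coef0 coef_poly /= expr0.
Qed.

Lemma Pnz i t : (i <= n)%N -> P i t != 0.
Proof.
move=> hi; rewrite /P prodf_seq_neq0; apply/allP => k.
rewrite mem_index_iota => /andP [_ ki] /=.
by rewrite subr_eq0 hY //; lia.
Qed.

Lemma inv t : forall i j : 'I_n.+1, (t <= i)%N ->
  neville_iter Vm t i j = if (t <= j)%N then P i t * (Q i t)`_(j - t) else 0.
Proof.
elim: t => [|t IH] i j hti.
  rewrite /= mxE /P /Q subn0 big_geq // big_nat1 mul1r coef_poly.
  by rewrite !subn0 ltn_ord.
have hin : (i <= n)%N by rewrite -ltnS.
rewrite /= /neville_step mxE leqNgt hti /=.
case: ifP => htj; last by [].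
have hi1 : ((inord i.-1 : 'I_n.+1) : nat) = i.-1 by rewrite inordK //; lia.
have ht : ((inord t : 'I_n.+1) : nat) = t by rewrite inordK //; lia.
rewrite !IH ?hi1 ?ht ?leqnn ?(ltnW htj); try lia.
rewrite subnn !Q0 !mulr1.
have hP : P i.-1 t != 0 by apply: Pnz; lia.
have -> : forall (A B C D : R), C != 0 -> A * B - A / C * (C * D) = A * (B - D).
  by move=> A B C D hC; field.
2: exact: hP.
set s := (i - t.+1)%N.
have e1 : (i.-1 - t)%N = s by rewrite /s; lia.
have e2 : i.-1.+1 = i by lia.
have e3 : (i - t)%N = s.+1 by rewrite /s; lia.
rewrite /Q /P e1 e2 e3.
rewrite (big_nat_recr i) /=; last by lia.
rewrite (@big_ltn _ _ _ s i) /=; last by lia.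
rewrite (@big_ltn _ _ _ s i.+1) /=; last by lia.
rewrite (big_nat_recr i) /=; last by lia.
rewrite (@big_ltn _ _ _ s i) /=; last by lia.
have hjn := ltn_ord j.
rewrite KL; last by lia.
have -> : (j - t).-1 = (j - t.+1)%N by lia.
by rewrite !mulrA [_ * (Y i - Y s)]mulrC.
Qed.

Lemma pivV (i : 'I_n.+1) : neville_pivot Vm i i = \prod_(0 <= k < i) (Y i - Y k).
Proof.
by rewrite /neville_pivot inv // leqnn subnn Q0 mulr1 /P subnn.
Qed.
End Vand.
Arguments Vm {R} n Y.
Arguments pivV {R n Y} hY i.

Lemma prod_cut (R : comPzRingType) n i (f : nat -> R) : (i <= n.+1)%N ->
  \prod_(k < n.+1 | (k < i)%N) f k = \prod_(0 <= k < i) f k.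
Proof.
move=> hi; rewrite (big_nat_widen 0 i n.+1 xpredT) // big_mkord.
by apply: eq_bigl => k.
Qed.

Theorem mainTheorem7 (R : realFieldType) (n : nat) (x : 'I_n.+1 -> R)
  (hn : (1 <= n)%N)
  (hpos : forall i, 0 < x i) (hlt1 : forall i, x i < 1)
  (hinc : forall i j : 'I_n.+1, (i < j)%N -> x i < x j) :
  forall i : 'I_n.+1,
    neville_pivot (bernstein_vandermonde x) i i =
    'C(n, i)%:R * (1 - x i) ^+ (n - i)
      * (\prod_(k < n.+1 | (k < i)%N) (x i - x k))
      / (\prod_(k < n.+1 | (k < i)%N) (1 - x k)).
Proof.
move=> i.
pose X k : R := x (inord k).
pose Y k : R := X k / (1 - X k).
have hX (k : 'I_n.+1) : X k = x k by rewrite /X inord_val.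
have h1 k : 1 - X k != 0 by rewrite subr_eq0 eq_sym (lt_eqF (hlt1 _)).
have hY : forall k l, (k <= n)%N -> (l <= n)%N -> k != l -> Y k != Y l.
  move=> k l hk hl; wlog kl : k l hk hl / (k < l)%N.
    move=> W; rewrite neq_ltn => /orP [] h; first by apply: W => //; rewrite ltn_eqF.
    by rewrite eq_sym; apply: W => //; rewrite ltn_eqF.
  move=> _; have lt : X k < X l.
    by apply: hinc; rewrite !inordK.
  apply/eqP => e; move: e; rewrite /Y => /eqP.
  rewrite eqr_div ?h1 // => /eqP e.
  have : X k = X l by nra.
  by move=> e'; move: lt; rewrite e' ltxx.
have hd (k : 'I_n.+1) : (1 - x k) ^+ n != 0 by rewrite expf_neq0 // -hX.
have hc (k : 'I_n.+1) : ('C(n, k)%:R : R) != 0.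
  by rewrite pnatr_eq0 -lt0n bin_gt0 -ltnS.
have eA : bernstein_vandermonde x =
   \matrix_(r, c) ((1 - x r) ^+ n * 'C(n, c)%:R * Vm n Y r c).
  apply/matrixP => r c; rewrite !mxE /Y -!hX expr_div_n.
  have hcn : (c <= n)%N by rewrite -ltnS.
  have -> : (1 - X r) ^+ n = (1 - X r) ^+ (n - c) * (1 - X r) ^+ c by rewrite -exprD subnK.
  field; by rewrite expf_neq0 ?h1.
rewrite eA /neville_pivot iter_scale // -/(neville_pivot _ _ _) pivV //.
have hin : (i <= n)%N by rewrite -ltnS.
have e1 : \prod_(k < n.+1 | (k < i)%N) (x i - x k) = \prod_(0 <= k < i) (x i - X k).
  rewrite -(prod_cut _ n i (fun k => x i - X k)); last by lia.
  by apply: eq_bigr => k _; rewrite hX.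
have e2 : \prod_(k < n.+1 | (k < i)%N) (1 - x k) = \prod_(0 <= k < i) (1 - X k).
  rewrite -(prod_cut _ n i (fun k => 1 - X k)); last by lia.
  by apply: eq_bigr => k _; rewrite hX.
rewrite e1 e2.
have hxi : 1 - x i != 0 by rewrite -hX h1.
have eY : \prod_(0 <= k < i) (Y i - Y k) =
    \prod_(0 <= k < i) (x i - X k) / ((1 - x i) ^+ i * \prod_(0 <= k < i) (1 - X k)).
  rewrite -[in (1 - x i) ^+ i](subn0 i) -prodr_const_nat -big_split -prodf_div /=.
  apply: eq_bigr => k _; by rewrite /Y -hX; field; rewrite !h1.
have hp : \prod_(0 <= k < i) (1 - X k) != 0.
  by rewrite prodf_seq_neq0; apply/allP => k _ /=.
rewrite eY.
have -> : (1 - x i) ^+ n = (1 - x i) ^+ (n - i) * (1 - x i) ^+ i by rewrite -exprD subnK.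
by field; rewrite hp expf_neq0.
Qed.
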